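(* Let $\mathcal{A}$ be an idempotent complete additive category. (1) Let $l\ge2$. Then $\mathcal{A}$ is $l$-uniformly regular coherent if and only if for every morphism $f_1\colon A_1\to A_0$ there is a sequence $0\to A_l\xrightarrow{f_l}A_{l-1}\xrightarrow{f_{l-1}}\cdots\xrightarrow{f_2}A_1\xrightarrow{f_1}A_0$ in $\mathcal{A}$ which is exact at $A_i$ for $i=1,2,\ldots,l$. (2) $\mathcal{A}$ is $1$-uniformly regular coherent if and only if every morphism $f\colon A_1\to A_0$ factors as $A_1\xrightarrow{f_1}B\xrightarrow{f_0}A_0$ with $f_1$ surjective and $f_0$ injective. (3) The following are equivalent: (a) $\mathcal{A}$ is $0$-uniformly regular coherent; (b) for every morphism $f_1\colon A_1\to A_0$ there is a morphism $f_0\colon A_0\to A_{-1}$ such that $A_1\xrightarrow{f_1}A_0\xrightarrow{f_0}A_{-1}\to0$ is exact (at $A_0$ and at $A_{-1}$); (c) for every morphism $f\colon A_1\to A_0$ there is a morphism $g\colon A_0\to A_1$ with $f\circ g\circ f=f$. (4) $\mathcal{A}$ is regular coherent if and only if for every morphism $f_1\colon A_1\to A_0$ there is a sequence of finite length $0\to A_n\xrightarrow{f_n}A_{n-1}\to\cdots\xrightarrow{f_2}A_1\xrightarrow{f_1}A_0$ in $\mathcal{A}$ which is exact at $A_i$ for $i=1,\ldots,n$.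
   Context: $\mathcal{A}$ is idempotent complete if every idempotent $p\colon A\to A$ splits (there is an isomorphism $A\cong B\oplus C$ under which $p$ becomes $\mathrm{id}_B\oplus0$). A $\mathbb{Z}\mathcal{A}$-module is an additive contravariant functor $\mathcal{A}\to$ abelian groups; finitely presented means the cokernel of a morphism between finite direct sums of representables $\mathrm{mor}_{\mathcal{A}}(?,A)$. $\mathcal{A}$ is regular coherent if every finitely presented $\mathbb{Z}\mathcal{A}$-module $M$ has an exact sequence $0\to P_n\to\cdots\to P_0\to M\to0$ of finite length with $P_i$ finitely generated projective, and $l$-uniformly regular coherent if this can always be achieved with $n=l$. A sequence $A_0\xrightarrow{f_0}A_1\xrightarrow{f_1}A_2$ in $\mathcal{A}$ is exact at $A_1$ if $f_1\circ f_0=0$ and for every object $A$ and $g\colon A\to A_1$ with $f_1\circ g=0$ there is $\bar g\colon A\to A_0$ with $f_0\circ\bar g=g$ (sequences ending in $0$, such as $A\to 0$ or $0\to A$, are read with zero maps). A morphism $f\colon A\to B$ is called surjective if for every object $C$ the map $\mathrm{mor}_{\mathcal{A}}(C,A)\to\mathrm{mor}_{\mathcal{A}}(C,B)$, $h\mapsto f\circ h$, is surjective, and injective if all these maps are injective (i.e. the induced morphism of representable $\mathbb{Z}\mathcal{A}$-modules is an epimorphism, resp. monomorphism). *)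

(* Defs.v *)
From HB Require Import structures.
From mathcomp Require Import all_boot all_order all_algebra.
Set Implicit Arguments.
Unset Strict Implicit.
Unset Printing Implicit Defensive.
Import GRing.Theory.
Local Open Scope ring_scope.

Record AddCat := {
  Obj : Type;
  cHom : Obj -> Obj -> zmodType;
  ccomp : forall A B D : Obj, cHom B D -> cHom A B -> cHom A D;
  idm : forall A : Obj, cHom A A;
  compA : forall A B D E (h : cHom D E) (g : cHom B D) (f : cHom A B),
      ccomp h (ccomp g f) = ccomp (ccomp h g) f;
  comp1l : forall A B (f : cHom A B), ccomp (idm B) f = f;
  comp1r : forall A B (f : cHom A B), ccomp f (idm A) = f;
  compDl : forall A B D (g1 g2 : cHom B D) (f : cHom A B),
      ccomp (g1 + g2) f = ccomp g1 f + ccomp g2 f;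
  compDr : forall A B D (g : cHom B D) (f1 f2 : cHom A B),
      ccomp g (f1 + f2) = ccomp g f1 + ccomp g f2;
  zero_obj : exists Z : Obj, forall A : Obj,
      (forall f g : cHom A Z, f = g) /\ (forall f g : cHom Z A, f = g);
  biprod : forall A B : Obj, exists (D : Obj) (i1 : cHom A D) (i2 : cHom B D)
      (p1 : cHom D A) (p2 : cHom D B),
      [/\ ccomp p1 i1 = idm A, ccomp p2 i2 = idm B, ccomp p1 i2 = 0,
          ccomp p2 i1 = 0 & ccomp i1 p1 + ccomp i2 p2 = idm D]
}.
Arguments cHom {_}.
Arguments ccomp {_ A B D}.
Arguments idm {_}.

Section Defs.
Variable C : AddCat.

Definition idem_complete : Prop :=
  forall (A : Obj C) (p : cHom A A), ccomp p p = p ->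
  exists (B D : Obj C) (i1 : cHom B A) (i2 : cHom D A) (p1 : cHom A B) (p2 : cHom A D),
    [/\ ccomp p1 i1 = idm B, ccomp p2 i2 = idm D, ccomp p1 i2 = 0,
        ccomp p2 i1 = 0 & ccomp i1 p1 + ccomp i2 p2 = idm A /\ p = ccomp i1 p1].

Definition cexact {X Y Z : Obj C} (f : cHom X Y) (g : cHom Y Z) : Prop :=
  ccomp g f = 0 /\
  forall (B : Obj C) (h : cHom B Y), ccomp g h = 0 -> exists hb : cHom B X, ccomp f hb = h.

Definition cexact_zero_left {Y Z : Obj C} (f : cHom Y Z) : Prop :=
  forall (B : Obj C) (h : cHom B Y), ccomp f h = 0 -> h = 0.

Definition csurj {X Y : Obj C} (f : cHom X Y) : Prop :=
  forall (B : Obj C) (h : cHom B Y), exists h' : cHom B X, ccomp f h' = h.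

Definition cinj {X Y : Obj C} (f : cHom X Y) : Prop :=
  forall (B : Obj C) (h h' : cHom B X), ccomp f h = ccomp f h' -> h = h'.

(* objects A_0, A_1, A_2 = Y 0, A_3 = Y 1, ... *)
Definition ext_obj (A0 A1 : Obj C) (Y : nat -> Obj C) (i : nat) : Obj C :=
  match i with 0 => A0 | 1 => A1 | k.+2 => Y k end.

(* 0 -> X n -d(n-1)-> ... -d 1-> X 1 -d 0-> X 0, exact at X i for 1 <= i <= n
   (d i plays the role of the paper's f_(i+1)) *)
Definition chain_exact (X : nat -> Obj C) (d : forall i, cHom (X i.+1) (X i))
  (n : nat) : Prop :=
  (forall i, (i.+1 < n)%N -> cexact (d i.+1) (d i)) /\
  (forall k, n = k.+1 -> cexact_zero_left (d k)).

(* ---------- Z A-modules (additive contravariant functors to Ab) ---------- *)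
Record Mod := {
  mob :> Obj C -> zmodType;
  mmap : forall A B : Obj C, cHom A B -> mob B -> mob A;
  mmapDf : forall A B (f g : cHom A B) (x : mob B), mmap (f + g) x = mmap f x + mmap g x;
  mmapDx : forall A B (f : cHom A B) (x y : mob B), mmap f (x + y) = mmap f x + mmap f y;
  mmap1 : forall A (x : mob A), mmap (idm A) x = x;
  mmapM : forall A B D (f : cHom A B) (g : cHom B D) (x : mob D),
      mmap (ccomp g f) x = mmap f (mmap g x)
}.
Arguments mmap _ {A B}.

Record Mor (M N : Mod) := {
  nt :> forall A : Obj C, M A -> N A;
  ntD : forall A (x y : M A), @nt A (x + y) = @nt A x + @nt A y;
  ntN : forall A B (f : cHom A B) (x : M B), @nt A (mmap M f x) = mmap N f (@nt B x)
}.
Arguments nt {M N} _ A _.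

Definition Rep (B : Obj C) : Mod.
Proof.
refine (@Build_Mod (fun A => cHom A B) (fun A A' f g => ccomp g f) _ _ _ _).
- by move=> A A' f g x; rewrite compDr.
- by move=> A A' f x y; rewrite compDl.
- by move=> A x; rewrite comp1r.
- by move=> A A' D f g x; rewrite compA.
Defined.

Definition msurj {M N : Mod} (t : Mor M N) : Prop :=
  forall A (y : N A), exists x : M A, t A x = y.
Definition minj {M N : Mod} (t : Mor M N) : Prop :=
  forall A (x : M A), t A x = 0 -> x = 0.
Definition mexact {M N K : Mod} (t : Mor M N) (s : Mor N K) : Prop :=
  (forall A (x : M A), s A (t A x) = 0) /\
  (forall A (y : N A), s A y = 0 -> exists x : M A, t A x = y).

(* F is a finite direct sum of representables mor(?,A_1) (+) ... (+) mor(?,A_n),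
   expressed by the biproduct equations in the category of modules *)
Definition fin_free (F : Mod) : Prop :=
  exists (n : nat) (A : 'I_n -> Obj C) (i : forall k, Mor (Rep (A k)) F)
         (p : forall k, Mor F (Rep (A k))),
    [/\ (forall k B (x : Rep (A k) B), p k B (i k B x) = x),
        (forall k k', k != k' -> forall B (x : Rep (A k') B), p k B (i k' B x) = 0) &
        (forall B (x : F B), \sum_(k < n) i k B (p k B x) = x)].

Definition fg_proj (P : Mod) : Prop :=
  exists (F : Mod) (i : Mor P F) (r : Mor F P),
    fin_free F /\ forall B (x : P B), r B (i B x) = x.

Definition fin_pres (M : Mod) : Prop :=
  exists (F1 F0 : Mod) (t : Mor F1 F0) (s : Mor F0 M),
    [/\ fin_free F1, fin_free F0, mexact t s & msurj s].

Definition has_resolution (M : Mod) (n : nat) : Prop :=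
  exists (P : nat -> Mod) (d : forall i, Mor (P i.+1) (P i)) (e : Mor (P 0) M),
    [/\ (forall i, (i <= n)%N -> fg_proj (P i)),
        msurj e,
        ((0 < n)%N -> mexact (d 0) e),
        (forall i, (i.+1 < n)%N -> mexact (d i.+1) (d i)) &
        (if n is k.+1 then minj (d k) else minj e)].

Definition reg_coherent : Prop :=
  forall M : Mod, fin_pres M -> exists n : nat, has_resolution M n.

Definition unif_reg_coherent (l : nat) : Prop :=
  forall M : Mod, fin_pres M -> has_resolution M l.

End Defs.

(* Main.v *)
Require Import Defs.
From HB Require Import structures.
From mathcomp Require Import all_boot all_order all_algebra.
From Stdlib Require Import ClassicalEpsilon PropExtensionality FunctionalExtensionality.
Set Implicit Arguments.
Unset Strict Implicit.
Unset Printing Implicit Defensive.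
Import GRing.Theory.
Local Open Scope ring_scope.

Notation cA := Defs.compA.
Notation c1l := Defs.comp1l.
Notation c1r := Defs.comp1r.
Notation cDl := Defs.compDl.
Notation cDr := Defs.compDr.

Section Basics.
Variable C : AddCat.
Implicit Types A B D X Y : Obj C.

Lemma comp0r A B D (g : cHom B D) : ccomp g (0 : cHom A B) = 0.
Proof. have H := cDr g (0 : cHom A B) 0. rewrite addr0 in H.
by apply: (addrI (ccomp g (0 : cHom A B))); rewrite -H addr0. Qed.
Lemma comp0l A B D (f : cHom A B) : ccomp (0 : cHom B D) f = 0.
Proof. have H := cDl (0 : cHom B D) 0 f. rewrite addr0 in H.
by apply: (addrI (ccomp (0 : cHom B D) f)); rewrite -H addr0. Qed.
Lemma compNr A B D (g : cHom B D) (f : cHom A B) : ccomp g (- f) = - ccomp g f.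
Proof. by apply: (addrI (ccomp g f)); rewrite -cDr !subrr comp0r. Qed.
Lemma compNl A B D (g : cHom B D) (f : cHom A B) : ccomp (- g) f = - ccomp g f.
Proof. by apply: (addrI (ccomp g f)); rewrite -cDl !subrr comp0l. Qed.
Lemma compBr A B D (g : cHom B D) (f1 f2 : cHom A B) :
  ccomp g (f1 - f2) = ccomp g f1 - ccomp g f2.
Proof. by rewrite cDr compNr. Qed.
Lemma compBl A B D (g1 g2 : cHom B D) (f : cHom A B) :
  ccomp (g1 - g2) f = ccomp g1 f - ccomp g2 f.
Proof. by rewrite cDl compNl. Qed.

Variable M : Mod C.
Lemma mmap0f A B (x : M B) : mmap (0 : cHom A B) x = 0.
Proof. have H := mmapDf (0 : cHom A B) 0 x. rewrite addr0 in H.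
by apply: (addrI (mmap (0 : cHom A B) x)); rewrite -H addr0. Qed.
Lemma mmapf0 A B (f : cHom A B) : mmap f (0 : M B) = 0.
Proof. have H := mmapDx f (0 : M B) 0. rewrite addr0 in H.
by apply: (addrI (mmap f (0 : M B))); rewrite -H addr0. Qed.
Lemma mmapNf A B (f : cHom A B) (x : M B) : mmap (- f) x = - mmap f x.
Proof. by apply: (addrI (mmap f x)); rewrite -mmapDf !subrr mmap0f. Qed.
Lemma mmapNx A B (f : cHom A B) (x : M B) : mmap f (- x) = - mmap f x.
Proof. by apply: (addrI (mmap f x)); rewrite -mmapDx !subrr mmapf0. Qed.
Lemma mmapBf A B (f g : cHom A B) (x : M B) : mmap (f - g) x = mmap f x - mmap g x.
Proof. by rewrite mmapDf mmapNf. Qed.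
Lemma mmapBx A B (f : cHom A B) (x y : M B) : mmap f (x - y) = mmap f x - mmap f y.
Proof. by rewrite mmapDx mmapNx. Qed.
End Basics.

Section MorLemmas.
Variable C : AddCat.
Variables M N : Mod C.
Variable t : Mor M N.
Lemma nt0 A : t A 0 = 0.
Proof. have H := ntD t (0 : M A) 0. rewrite addr0 in H.
by apply: (addrI (t A 0)); rewrite -H addr0. Qed.
Lemma ntOpp A (x : M A) : t A (- x) = - t A x.
Proof. by apply: (addrI (t A x)); rewrite -ntD !subrr nt0. Qed.
Lemma ntB A (x y : M A) : t A (x - y) = t A x - t A y.
Proof. by rewrite ntD ntOpp. Qed.
End MorLemmas.

Section Mors.
Variable C : AddCat.

Definition mcomp (M N K : Mod C) (s : Mor N K) (t : Mor M N) : Mor M K.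
Proof.
refine (@Build_Mor C M K (fun A x => s A (t A x)) _ _).
- by move=> A x y; rewrite !ntD.
- by move=> A B f x; rewrite !ntN.
Defined.

Definition idMor (M : Mod C) : Mor M M.
Proof.
refine (@Build_Mor C M M (fun A x => x) _ _) => //.
Defined.

Definition zeroMor (M N : Mod C) : Mor M N.
Proof.
refine (@Build_Mor C M N (fun A x => 0) _ _).
- by move=> *; rewrite addr0.
- by move=> A B f x; rewrite mmapf0.
Defined.

Definition RepM (A B : Obj C) (f : cHom A B) : Mor (Rep A) (Rep B).
Proof.
refine (@Build_Mor C (Rep A) (Rep B) (fun X x => ccomp f x) _ _).
- by move=> X x y; rewrite /= cDr.
- by move=> X Y g x; rewrite /= cA.
Defined.

Definition elemMor (M : Mod C) (B : Obj C) (e : M B) : Mor (Rep B) M.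
Proof.
refine (@Build_Mor C (Rep B) M (fun X x => mmap x e) _ _).
- by move=> X x y; rewrite mmapDf.
- by move=> X Y g x; rewrite /= mmapM.
Defined.

Lemma yon (A : Obj C) (N : Mod C) (t : Mor (Rep A) N) X (x : cHom X A) :
  t X x = mmap x (t A (idm A)).
Proof.
rewrite -ntN /=. by rewrite c1l.
Qed.
End Mors.


Section Coker.
Variable C : AddCat.
Variables A1 A0 : Obj C.
Variable f1 : cHom A1 A0.
Section AtX.
Variable X : Obj C.

Definition qrel (x y : cHom X A0) := exists h : cHom X A1, x - y = ccomp f1 h.

Lemma qrel_refl x : qrel x x.
Proof. by exists 0; rewrite subrr comp0r. Qed.
Lemma qrel_sym x y : qrel x y -> qrel y x.
Proof. by case=> h e; exists (- h); rewrite compNr -e opprB. Qed.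
Lemma qrel_trans x y z : qrel x y -> qrel y z -> qrel x z.
Proof.
case=> h e [h' e']; exists (h + h'); rewrite cDr -e -e'.
by rewrite addrA subrK.
Qed.

Definition canon (x : cHom X A0) : cHom X A0 :=
  epsilon (inhabits (0 : cHom X A0)) (fun y => qrel x y).

Lemma qrel_canon x : qrel x (canon x).
Proof. apply: (epsilon_spec (inhabits 0) (fun y => qrel x y)). exists x; exact: qrel_refl. Qed.

Lemma canon_eq x y : qrel x y -> canon x = canon y.
Proof.
move=> h; rewrite /canon.
have -> : (fun z => qrel x z) = (fun z => qrel y z) => //.
apply: functional_extensionality => z; apply: propositional_extensionality; split.
- by move=> H; apply: qrel_trans (qrel_sym h) H.
- by move=> H; apply: qrel_trans h H.
Qed.

Lemma canon_rel x y : canon x = canon y -> qrel x y.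
Proof.
move=> e; apply: qrel_trans (qrel_canon x) _; rewrite e; exact: qrel_sym (qrel_canon y).
Qed.

Lemma canon_idem x : canon (canon x) == canon x.
Proof. by apply/eqP; apply: canon_eq; apply: qrel_sym; apply: qrel_canon. Qed.

Definition qT := {x : cHom X A0 | canon x == x}.
HB.instance Definition _ := Choice.on qT.

Definition qpi (x : cHom X A0) : qT := exist _ (canon x) (canon_idem x).

Lemma qpiE x y : qpi x = qpi y <-> qrel x y.
Proof.
split.
- by move=> e; apply: canon_rel; have := congr1 val e.
- by move=> h; apply: val_inj; rewrite /= (canon_eq h).
Qed.

Lemma qpi_val (q : qT) : qpi (val q) = q.
Proof. by apply: val_inj => /=; apply/eqP; case: q. Qed.

Lemma qW (P : qT -> Prop) : (forall x, P (qpi x)) -> forall q, P q.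
Proof. by move=> H q; rewrite -(qpi_val q). Qed.

Definition qadd (a b : qT) := qpi (val a + val b).
Definition qopp (a : qT) := qpi (- val a).
Definition qzero := qpi 0.

Lemma qrel_val x : qrel (val (qpi x)) x.
Proof. exact: qrel_sym (qrel_canon x). Qed.

Lemma qrelD x y x' y' : qrel x x' -> qrel y y' -> qrel (x + y) (x' + y').
Proof.
case=> h e [h' e']; exists (h + h'); rewrite cDr -e -e'.
by rewrite opprD addrACA.
Qed.
Lemma qrelN x x' : qrel x x' -> qrel (- x) (- x').
Proof. by case=> h e; exists (- h); rewrite compNr -e opprD. Qed.

Lemma qaddE x y : qadd (qpi x) (qpi y) = qpi (x + y).
Proof. by apply/qpiE; apply: qrelD; apply: qrel_val. Qed.
Lemma qoppE x : qopp (qpi x) = qpi (- x).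
Proof. by apply/qpiE; apply: qrelN; apply: qrel_val. Qed.

Lemma qaddA : associative qadd.
Proof.
by elim/qW=> x; elim/qW=> y; elim/qW=> z; rewrite !qaddE addrA.
Qed.
Lemma qaddC : commutative qadd.
Proof. by elim/qW=> x; elim/qW=> y; rewrite !qaddE addrC. Qed.
Lemma qadd0 : left_id qzero qadd.
Proof. by elim/qW=> x; rewrite /qzero qaddE add0r. Qed.
Lemma qaddN : left_inverse qzero qopp qadd.
Proof. by elim/qW=> x; rewrite qoppE qaddE addNr. Qed.

HB.instance Definition _ := GRing.isZmodule.Build qT qaddA qaddC qadd0 qaddN.

Lemma qpiD x y : qpi (x + y) = qpi x + qpi y.
Proof. by rewrite -qaddE. Qed.
Lemma qpi0 : qpi 0 = 0.
Proof. by []. Qed.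
Lemma qpi_eq0 x : qpi x = 0 <-> exists h, x = ccomp f1 h.
Proof.
rewrite -qpi0 qpiE /qrel subr0; done.
Qed.
End AtX.

Definition qmap (X Y : Obj C) (g : cHom X Y) (q : qT Y) : qT X := qpi (ccomp (val q) g).

Lemma qmapE X Y (g : cHom X Y) x : qmap g (qpi x) = qpi (ccomp x g).
Proof.
apply/qpiE; case: (qrel_val x) => h e; exists (ccomp h g).
by rewrite cA -e compBl.
Qed.

Definition CokMod : Mod C.
Proof.
refine (@Build_Mod C qT qmap _ _ _ _).
- move=> X Y f g; elim/qW=> x. by rewrite !qmapE cDr qpiD.
- move=> X Y f; elim/qW=> x; elim/qW=> y. by rewrite -qpiD !qmapE cDl qpiD.
- move=> X; elim/qW=> x. by rewrite qmapE c1r.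
- move=> X Y Z f g; elim/qW=> x. by rewrite !qmapE cA.
Defined.

Definition cokS : Mor (Rep A0) CokMod.
Proof.
refine (@Build_Mor C (Rep A0) CokMod (fun X x => qpi x) _ _).
- by move=> X x y; rewrite qpiD.
- by move=> X Y g x; rewrite /= qmapE.
Defined.

Lemma rep_fin_free (A : Obj C) : fin_free (Rep A).
Proof.
exists 1%N, (fun _ => A), (fun _ => idMor (Rep A)), (fun _ => idMor (Rep A)); split => //.
- by move=> k k'; rewrite !ord1.
- by move=> B x; rewrite big_ord1.
Qed.

Lemma coker_exists : exists (M : Mod C) (sig : M A0),
  fin_pres M /\ (forall X (y : M X), exists q : cHom X A0, mmap q sig = y) /\
  (forall X (x : cHom X A0), mmap x sig = 0 <-> exists z, ccomp f1 z = x).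
Proof.
exists CokMod, (qpi (idm A0)); split; last split.
- exists (Rep A1), (Rep A0), (RepM f1), cokS; split; try exact: rep_fin_free.
  + split.
    * move=> X x /=. apply/qpi_eq0. by exists x.
    * move=> X y /= /qpi_eq0 [h ->]. by exists h.
  + move=> X y; exists (val y) => /=. exact: qpi_val.
- move=> X y; exists (val y) => /=. by rewrite qmapE c1l qpi_val.
- move=> X x /=. rewrite qmapE c1l qpi_eq0. by split; case=> z e; exists z.
Qed.
End Coker.


Section Free.
Variable C : AddCat.

Lemma nt_sum (M N : Mod C) (t : Mor M N) X n (F : 'I_n -> M X) :
  t X (\sum_(k < n) F k) = \sum_(k < n) t X (F k).
Proof.
elim/big_rec2: _ => [|k y1 y2 _ <-]; first exact: nt0.
by rewrite ntD.
Qed.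

Lemma zero_hom_eq (Z : Obj C) (HZ : forall A : Obj C,
      (forall f g : cHom A Z, f = g) /\ (forall f g : cHom Z A, f = g)) X (f g : cHom X Z) : f = g.
Proof. by case: (HZ X) => H _; apply: H. Qed.

Lemma finsum n : forall (N : Mod C) (A : 'I_n -> Obj C)
  (i : forall k, Mor (Rep (A k)) N) (p : forall k, Mor N (Rep (A k))),
  (forall k B x, p k B (i k B x) = x) ->
  (forall k k', k != k' -> forall B x, p k B (i k' B x) = 0) ->
  exists (B : Obj C) (u : Mor (Rep B) N) (v : Mor N (Rep B)),
  [/\ forall X y, u X (v X y) = \sum_(k < n) i k X (p k X y),
      forall X x, v X (u X x) = x,
      forall (K : Mod C) (q : Mor N K), (forall k X w, q X (i k X w) = 0) ->
          forall X x, q X (u X x) = 0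
    & forall X y, (forall k, p k X y = 0) -> v X y = 0].
Proof.
elim: n => [|n IH] N A i p Hpi Hpi'.
  case: (zero_obj C) => Z HZ.
  exists Z, (zeroMor (Rep Z) N), (zeroMor N (Rep Z)); split => //=.
  - by move=> X y; rewrite big_ord0.
  - by move=> X x; apply: (zero_hom_eq HZ).
  - by move=> K q _ X x; rewrite nt0.
have Hne : forall j j' : 'I_n, j != j' -> lift ord0 j != lift ord0 j'.
  by move=> j j' ne; rewrite (inj_eq (@lift_inj _ ord0)).
have [B' [u' [v' [Huv' Hvu' Hq' Hv']]]] :=
  IH N (fun j => A (lift ord0 j)) (fun j => i (lift ord0 j)) (fun j => p (lift ord0 j))
    (fun j => Hpi (lift ord0 j))
    (fun j j' ne => Hpi' _ _ (Hne j j' ne)).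
case: (biprod (A ord0) B') => D [i1 [i2 [p1 [p2 [e11 e22 e12 e21 eid]]]]].
pose uf X (x : Rep D X) : N X := i ord0 X (ccomp p1 x) + u' X (ccomp p2 x).
have uD : forall X (x y : Rep D X), uf X (x + y) = uf X x + uf X y.
  by move=> X x y; rewrite /uf !cDr !ntD addrACA.
have uN : forall X Y (f : cHom X Y) (x : Rep D Y), uf X (mmap f x) = mmap f (uf Y x).
  move=> X Y f x; rewrite /uf mmapDx -!ntN /=. by rewrite !cA.
pose u := Build_Mor uD uN.
pose vf X (y : N X) : Rep D X := ccomp i1 (p ord0 X y) + ccomp i2 (v' X y).
have vD : forall X (x y : N X), vf X (x + y) = vf X x + vf X y.
  by move=> X x y; rewrite /vf !ntD !cDr addrACA.
have vN : forall X Y (f : cHom X Y) (y : N Y), vf X (mmap f y) = mmap f (vf Y y).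
  move=> X Y f y; rewrite /vf !ntN /=. by rewrite cDl !cA.
pose v := Build_Mor vD vN.
exists D, u, v; split.
- move=> X y; rewrite /= /uf /vf big_ord_recl -Huv'.
  by rewrite !cDr !cA e11 e22 e12 e21 !comp0l !c1l addr0 add0r.
- move=> X x; rewrite /= /vf /uf !ntD.
  have -> : p ord0 X (u' X (ccomp p2 x)) = 0.
    apply: (Hq' _ (p ord0)) => k Y w. by apply: Hpi'; rewrite ?neq_lift // eq_sym neq_lift.
  have -> : v' X (i ord0 X (ccomp p1 x)) = 0.
    apply: Hv' => k. by apply: Hpi'; rewrite ?neq_lift // eq_sym neq_lift.
  rewrite Hpi Hvu' addr0 add0r !cA -cDl eid. exact: c1l.
- move=> K q Hq X x; rewrite /= /uf ntD Hq add0r.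
  by apply: Hq' => k Y w; apply: Hq.
- by move=> X y H; rewrite /= /vf H Hv' ?comp0r ?addr0 //.
Qed.

Lemma free_rep (F : Mod C) : fin_free F ->
  exists (B : Obj C) (u : Mor (Rep B) F) (v : Mor F (Rep B)),
    (forall X y, u X (v X y) = y) /\ (forall X x, v X (u X x) = x).
Proof.
case=> n [A [i [p [H1 H2 H3]]]].
have [B [u [v [Huv Hvu _ _]]]] := finsum H1 H2.
exists B, u, v; split => // X y; by rewrite Huv H3.
Qed.

Lemma fgproj_rep (HC : idem_complete C) (P : Mod C) : fg_proj P ->
  exists (D : Obj C) (phi : Mor (Rep D) P) (psi : Mor P (Rep D)),
    (forall X y, phi X (psi X y) = y) /\ (forall X x, psi X (phi X x) = x).
Proof.
case=> F [iP [rP [/free_rep [B [u [v [Huv Hvu]]]] HrP]]].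
pose j := mcomp v iP. pose q := mcomp rP u.
have Hqj : forall X y, q X (j X y) = y by move=> X y; rewrite /= Huv HrP.
pose e := j B (q B (idm B)).
have He : forall X (x : cHom X B), j X (q X x) = ccomp e x.
  move=> X x. exact: (yon (mcomp j q) x).
have ee : ccomp e e = e by rewrite -He /e Hqj.
case: (HC B e ee) => D [E [i1 [i2 [p1 [p2 [e11 e22 e12 e21 [eid ei]]]]]]].
exists D, (mcomp q (RepM i1)), (mcomp (RepM p1) j); split.
- move=> X y.
  have -> : mcomp q (RepM i1) X (mcomp (RepM p1) j X y) = q X (ccomp i1 (ccomp p1 (j X y))) by [].
  by rewrite cA -ei -He !Hqj.
- move=> X x.
  have -> : mcomp (RepM p1) j X (mcomp q (RepM i1) X x) = ccomp p1 (j X (q X (ccomp i1 x))) by [].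
  by rewrite He ei -!cA cA e11 c1l cA e11 c1l.
Qed.

Lemma pres_of_finpres (M : Mod C) : fin_pres M ->
  exists (B1 B0 : Obj C) (f : cHom B1 B0) (eps : M B0),
    (forall X (y : M X), exists x : cHom X B0, mmap x eps = y) /\
    (forall X (x : cHom X B0), mmap x eps = 0 <-> exists z, ccomp f z = x).
Proof.
case=> F1 [F0 [t [s [/free_rep [B1 [u1 [v1 [Huv1 Hvu1]]]]
                     /free_rep [B0 [u0 [v0 [Huv0 Hvu0]]]] [Hts Hex] Hs]]]].
pose f : cHom B1 B0 := v0 B1 (t B1 (u1 B1 (idm B1))).
pose eps := s B0 (u0 B0 (idm B0)).
have Ef : forall X (x : cHom X B1), v0 X (t X (u1 X x)) = ccomp f x.
  move=> X x. exact: (yon (mcomp v0 (mcomp t u1)) x).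
have Ee : forall X (x : cHom X B0), s X (u0 X x) = mmap x eps.
  move=> X x. exact: (yon (mcomp s u0) x).
exists B1, B0, f, eps; split.
- move=> X y. case: (Hs X y) => w <-. exists (v0 X w). by rewrite -Ee Huv0.
- move=> X x; split.
  + rewrite -Ee => /Hex [w Hw]. exists (v1 X w).
    by rewrite -Ef Huv1 Hw Hvu0.
  + case=> z <-. by rewrite -Ee -Ef Huv0 Hts.
Qed.
End Free.


Section Shift.
Variable C : AddCat.
Hypothesis HC : idem_complete C.

Definition Sres (N : Mod C) (T : forall X, N X -> Prop) (m : nat) : Prop :=
 exists (B : nat -> Obj C) (g : forall i, cHom (B i.+1) (B i)) (eps : N (B 0%N)),
 [/\ forall X (y : N X), T X y <-> exists x : cHom X (B 0%N), mmap x eps = y,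
     m = 0%N -> forall X (x : cHom X (B 0%N)), mmap x eps = 0 -> x = 0,
     (0 < m)%N -> forall X (x : cHom X (B 0%N)), mmap x eps = 0 <-> exists z, ccomp (g 0%N) z = x
   & chain_exact g m].

Lemma shift (N : Mod C) (T : forall X, N X -> Prop) m (Q : Obj C) (sig : N Q) :
  (forall X y, T X y <-> exists q : cHom X Q, mmap q sig = y) ->
  Sres T m.+1 -> Sres (fun X (y : Rep Q X) => mmap y sig = 0) m.
Proof.
move=> HT [B [g [eps [Ha Hb Hc Hd]]]].
have exact0 := Hc erefl.
have [a Ha'] : exists a : cHom Q (B 0%N), mmap a eps = sig.
  by apply/Ha; apply/HT; exists (idm Q); rewrite mmap1.
case: (biprod (B 1%N) Q) => D [in1 [in2 [pr1 [pr2 [e11 e22 e12 e21 eid]]]]].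
have P1 : forall X (z : cHom X (B 1%N)) (q : cHom X Q), ccomp pr1 (ccomp in1 z + ccomp in2 q) = z.
  by move=> X z q; rewrite cDr !cA e11 e12 comp0l c1l addr0.
have P2 : forall X (z : cHom X (B 1%N)) (q : cHom X Q), ccomp pr2 (ccomp in1 z + ccomp in2 q) = q.
  by move=> X z q; rewrite cDr !cA e22 e21 comp0l c1l add0r.
have decomp : forall X (h : cHom X D), h = ccomp in1 (ccomp pr1 h) + ccomp in2 (ccomp pr2 h).
  by move=> X h; rewrite !cA -cDl eid c1l.
pose phi := ccomp (g 0%N) pr1 + ccomp a pr2.
have Phi : forall X (h : cHom X D), ccomp phi h = ccomp (g 0%N) (ccomp pr1 h) + ccomp a (ccomp pr2 h).
  by move=> X h; rewrite cDl !cA.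
have surj : forall X (p : cHom X (B 0%N)), exists h : cHom X D, ccomp phi h = p.
  move=> X p. have : T X (mmap p eps) by apply/Ha; exists p.
  case/HT => q Hq.
  have : mmap (p - ccomp a q) eps = 0 by rewrite mmapBf mmapM Ha' Hq subrr.
  case/exact0 => z Hz. exists (ccomp in1 z + ccomp in2 q).
  by rewrite Phi P1 P2 Hz subrK.
case: (surj _ (idm (B 0%N))) => rho Hrho.
pose pi := idm D - ccomp rho phi.
have pipi : ccomp pi pi = pi.
  rewrite /pi compBl c1l compBr c1r -cA [ccomp phi (ccomp rho phi)]cA Hrho c1l.
  by rewrite subrr subr0.
case: (HC pipi) => L [E [j1 [j2 [q1 [q2 [f11 f22 f12 f21 [fid fpi]]]]]]].
have phij : ccomp phi j1 = 0.
  rewrite -[j1]c1r -f11 [ccomp j1 (ccomp q1 j1)]cA -fpi cA /pi compBr c1r cA Hrho c1l subrr.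
  exact: comp0l.
have ker : forall X (h : cHom X D), ccomp phi h = 0 -> ccomp j1 (ccomp q1 h) = h.
  move=> X h H. by rewrite cA -fpi /pi compBl c1l -cA H comp0r subr0.
have j1inj : forall X (x y : cHom X L), ccomp j1 x = ccomp j1 y -> x = y.
  move=> X x y H. have := congr1 (ccomp q1) H. by rewrite !cA f11 !c1l.
have j1in1 : forall X (y : cHom X (B 1%N)), ccomp (g 0%N) y = 0 ->
    ccomp j1 (ccomp q1 (ccomp in1 y)) = ccomp in1 y.
  move=> X y H; apply: ker. by rewrite Phi [ccomp pr1 _]cA [ccomp pr2 _]cA e11 e21 c1l comp0l comp0r H addr0.
have PJ : forall X (x : cHom X L),
    ccomp (g 0%N) (ccomp pr1 (ccomp j1 x)) + ccomp a (ccomp pr2 (ccomp j1 x)) = 0.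
  move=> X x. by rewrite -Phi cA phij comp0l.
have in1_0 : forall X (y : cHom X (B 1%N)), ccomp (g 0%N) y = 0 ->
    ccomp q1 (ccomp in1 y) = 0 -> y = 0.
  move=> X y Hy H. have := j1in1 X y Hy. rewrite H comp0r => /(congr1 (ccomp pr1)).
  by rewrite comp0r cA e11 c1l => <-.
pose B' := fun i => match i with 0%N => L | k.+1 => B k.+2 end.
pose g' := fun i => match i return cHom (B' i.+1) (B' i) with
                    | 0%N => ccomp q1 (ccomp in1 (g 1%N)) | k.+1 => g k.+2 end.
exists B', g', (ccomp pr2 j1 : Rep Q L); split.
- move=> X y; split.
  + rewrite -Ha' -mmapM => /exact0 [z Hz].
    pose h := ccomp in1 (- z) + ccomp in2 y.
    have Hh : ccomp phi h = 0 by rewrite Phi P1 P2 compNr Hz addNr.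
    exists (ccomp q1 h). change (ccomp (ccomp pr2 j1) (ccomp q1 h) = y).
    by rewrite -cA ker // P2.
  + case=> x <-. change (mmap (ccomp (ccomp pr2 j1) x) sig = 0).
    rewrite -Ha' -mmapM.
    have Ea : ccomp a (ccomp (ccomp pr2 j1) x) = - ccomp (g 0%N) (ccomp pr1 (ccomp j1 x)).
      apply/eqP; rewrite -addr_eq0 addrC -cA. exact/eqP/PJ.
    rewrite Ea mmapNf. apply/eqP; rewrite oppr_eq0; apply/eqP.
    by apply/exact0; eexists.
- move=> m0 X x H. change (ccomp (ccomp pr2 j1) x = 0) in H.
  have H1 := PJ X x. rewrite [ccomp pr2 _]cA H comp0r addr0 in H1.
  have Hz : ccomp pr1 (ccomp j1 x) = 0.
    by apply: (proj2 Hd 0%N (congr1 S m0)).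
  apply: j1inj. by rewrite comp0r (decomp _ (ccomp j1 x)) Hz [ccomp pr2 _]cA H !comp0r addr0.
- move=> m0 X x; split.
  + move=> H. change (ccomp (ccomp pr2 j1) x = 0) in H.
    have H1 := PJ X x. rewrite [ccomp pr2 _]cA H comp0r addr0 in H1.
    have [z Hz] : exists z, ccomp (g 1%N) z = ccomp pr1 (ccomp j1 x).
      by apply: (proj2 (proj1 Hd 0%N m0)).
    exists z. apply: j1inj. change (ccomp j1 (ccomp (ccomp q1 (ccomp in1 (g 1%N))) z) = ccomp j1 x).
    rewrite -!cA j1in1; last by rewrite cA (proj1 (proj1 Hd 0%N m0)) comp0l.
    by rewrite [RHS]decomp [ccomp pr2 _]cA H comp0r addr0 Hz.
  + case=> z <-. change (ccomp (ccomp pr2 j1) (ccomp (ccomp q1 (ccomp in1 (g 1%N))) z) = 0).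
    rewrite -!cA j1in1; last by rewrite cA (proj1 (proj1 Hd 0%N m0)) comp0l.
    by rewrite cA e21 comp0l.
- split.
  + case=> [|k] Hi /=.
    * have [Hg21 Hg21'] := proj1 Hd 1%N Hi.
      have Hg10 : ccomp (g 0%N) (g 1%N) = 0 by case: (proj1 Hd 0%N (ltnW Hi)).
      split.
      -- by rewrite -!cA Hg21 !comp0r.
      -- move=> X h Hh. apply: Hg21'. apply: in1_0; first by rewrite cA Hg10 comp0l.
         by rewrite !cA -[ccomp (ccomp q1 in1) (g 1%N)]cA.
    * exact: (proj1 Hd k.+2 Hi).
  + case=> [|k] mk /=.
    * move=> X h Hh. apply: (proj2 Hd 1%N (congr1 S mk)). apply: in1_0.
      -- by rewrite cA (proj1 (proj1 Hd 0%N ltac:(by rewrite mk))) comp0l.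
      -- by rewrite !cA -[ccomp (ccomp q1 in1) (g 1%N)]cA.
    * exact: (proj2 Hd k.+2 (congr1 S mk)).
Qed.
End Shift.


Section Res.
Variable C : AddCat.

Lemma rep_fgproj (A : Obj C) : fg_proj (Rep A).
Proof. exists (Rep A), (idMor _), (idMor _); split => //; exact: rep_fin_free. Qed.

Lemma S_to_res (M : Mod C) m : Sres (fun X (_ : M X) => True) m -> has_resolution M m.
Proof.
case=> B [g [eps [Ha Hb Hc Hd]]].
exists (fun i => Rep (B i)), (fun i => RepM (g i)), (elemMor eps); split.
- move=> i _; exact: rep_fgproj.
- move=> X y; case: (proj1 (Ha X y) I) => x <-; by exists x.
- move=> m0; split.
  + move=> X x /=. apply/(Hc m0). by exists x.
  + move=> X y /= /(Hc m0) [z <-]. by exists z.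
- move=> i Hi; case: (proj1 Hd i Hi) => H1 H2; split.
  + move=> X x /=. by rewrite cA H1 comp0l.
  + move=> X y /= /H2 [hb <-]. by exists hb.
- case: m Hb Hd {Hc Ha} => [|k] Hb Hd.
  + move=> X x /= H; exact: Hb.
  + move=> X x /= H; exact: (proj2 Hd k erefl X x H).
Qed.

Lemma res_to_S (HC : idem_complete C) (M : Mod C) m :
  has_resolution M m -> Sres (fun X (_ : M X) => True) m.
Proof.
case=> P [d [e [Hfg Hse H0 Hex Hlast]]].
case: (zero_obj C) => Z HZ.
have Hch : forall i, exists x : {D : Obj C & (Mor (Rep D) (P i) * Mor (P i) (Rep D))%type},
   (i <= m)%N -> (forall X y, (projT2 x).1 X ((projT2 x).2 X y) = y) /\
                 (forall X z, (projT2 x).2 X ((projT2 x).1 X z) = z).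
  move=> i. case: (leqP i m) => him.
  - case: (fgproj_rep HC (Hfg i him)) => D [phi [psi [H1 H2]]].
    by exists (existT _ D (phi, psi)).
  - exists (existT _ Z (zeroMor _ _, zeroMor _ _)). done.
pose F i := proj1_sig (constructive_indefinite_description _ (Hch i)).
have HF : forall i, (i <= m)%N -> _ := fun i => proj2_sig (constructive_indefinite_description _ (Hch i)).
pose D i := projT1 (F i).
pose phi i : Mor (Rep (D i)) (P i) := (projT2 (F i)).1.
pose psi i : Mor (P i) (Rep (D i)) := (projT2 (F i)).2.
have I1 : forall i, (i <= m)%N -> forall X y, phi i X (psi i X y) = y.
  by move=> i him; case: (HF i him).
have I2 : forall i, (i <= m)%N -> forall X z, psi i X (phi i X z) = z.
  by move=> i him; case: (HF i him).
pose g i : cHom (D i.+1) (D i) := psi i (D i.+1) (d i (D i.+1) (phi i.+1 (D i.+1) (idm (D i.+1)))).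
pose eps := e (D 0%N) (phi 0%N (D 0%N) (idm (D 0%N))).
have Eg : forall i X (x : cHom X (D i.+1)), psi i X (d i X (phi i.+1 X x)) = ccomp (g i) x.
  move=> i X x. exact: (yon (mcomp (psi i) (mcomp (d i) (phi i.+1))) x).
have Ee : forall X (x : cHom X (D 0%N)), e X (phi 0%N X x) = mmap x eps.
  move=> X x. exact: (yon (mcomp e (phi 0%N)) x).
exists D, g, eps; split.
- move=> X y; split => // _. case: (Hse X y) => p <-. exists (psi 0%N X p).
  by rewrite -Ee I1.
- move=> m0 X x. rewrite -Ee => H.
  have H' : phi 0%N X x = 0 by move: Hlast; rewrite m0; apply.
  by rewrite -(I2 0%N _ X x) // H' nt0.
- move=> m0 X x; split.
  + rewrite -Ee => /(proj2 (H0 m0)) [w Hw]. exists (psi 1%N X w).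
    by rewrite -Eg I1 // Hw I2.
  + case=> z <-. by rewrite -Eg -Ee I1 // (proj1 (H0 m0)).
- split.
  + move=> i Hi; split.
    * rewrite -Eg /g I1 ?(proj1 (Hex i Hi)) ?nt0 //. exact: ltnW.
    * move=> X h Hh. rewrite -Eg in Hh.
      have : d i X (phi i.+1 X h) = 0.
        by rewrite -(I1 i _ X (d i X _)) ?Hh ?nt0 // ltnW // ltnW.
      case/(proj2 (Hex i Hi)) => w Hw. exists (psi i.+2 X w).
      by rewrite -Eg I1 // Hw I2 // ltnW.
  + move=> k mk X h Hh. rewrite -Eg in Hh.
    have : d k X (phi k.+1 X h) = 0.
      by rewrite -(I1 k _ X (d k X _)) ?Hh ?nt0 // mk.
    move: Hlast; rewrite mk => Hl /Hl H.
    by rewrite -(I2 k.+1 _ X h) ?H ?nt0 // mk.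
Qed.

Lemma pad01 (N : Mod C) T : Sres T 0 -> Sres (N:=N) T 1.
Proof.
case: (zero_obj C) => Z HZ.
case=> B [g [eps [Ha Hb Hc Hd]]].
pose B' := fun i => match i with 0%N => B 0%N | _ => Z end.
exists B', (fun i => 0), eps; split => //.
- move=> _ X x; split.
  + move=> /(Hb erefl) ->. exists 0. by rewrite comp0r.
  + case=> z <-. by rewrite comp0l mmap0f.
- split => // k [<-] X h _. exact: (@zero_hom_eq C Z HZ X h 0).
Qed.

Lemma pad12 (N : Mod C) T : Sres T 1 -> Sres (N:=N) T 2.
Proof.
case: (zero_obj C) => Z HZ.
case=> B [g [eps [Ha Hb Hc Hd]]].
pose B' := fun i => match i with 0%N => B 0%N | 1%N => B 1%N | _ => Z end.
pose g' := fun i => match i return cHom (B' i.+1) (B' i) with 0%N => g 0%N | _ => 0 end.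
exists B', g', eps; split => //.
- split.
  + case=> [|k] // _ /=. split; first exact: comp0r.
    move=> X h Hh. have -> : h = 0 by apply: (proj2 Hd 0%N erefl).
    exists 0. by rewrite comp0r.
  + move=> k [<-] X h _. exact: (@zero_hom_eq C Z HZ X h 0).
Qed.

Lemma chain_of_S (A1 A0 : Obj C) (f1 : cHom A1 A0) m :
  Sres (fun X (y : Rep A1 X) => mmap y (f1 : Rep A0 A1) = 0) m ->
  exists (Y : nat -> Obj C) (d : forall i, cHom (ext_obj A0 A1 Y i.+1) (ext_obj A0 A1 Y i)),
    d 0%N = f1 /\ chain_exact d m.+2.
Proof.
case=> B [g [eps [Ha Hb Hc Hd]]].
exists B, (fun i => match i return cHom (ext_obj A0 A1 B i.+1) (ext_obj A0 A1 B i) with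
                | 0%N => f1 | 1%N => eps | k.+2 => g k end); split => //; split.
- case=> [|[|k]] Hi /=.
  + split.
    * have : exists x : cHom (B 0%N) (B 0%N), mmap x eps = eps by exists (idm _); rewrite mmap1.
      by move/Ha.
    * move=> X h Hh. by apply/Ha.
  + split.
    * by apply/(Hc Hi); exists (idm _); rewrite c1r.
    * move=> X h Hh. by apply/(Hc Hi).
  + exact: (proj1 Hd k Hi).
- case=> [|[|k]] // mk /=.
  + move: mk => [mk] X h Hh. exact: (Hb mk).
  + move: mk => [mk]. exact: (proj2 Hd k mk).
Qed.

Lemma S_of_chain (M : Mod C) (B1 B0 : Obj C) (f : cHom B1 B0) (eps : M B0)
  (Hs : forall X (y : M X), exists x : cHom X B0, mmap x eps = y)
  (Hk : forall X (x : cHom X B0), mmap x eps = 0 <-> exists z, ccomp f z = x)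
  (Y : nat -> Obj C) (d : forall i, cHom (ext_obj B0 B1 Y i.+1) (ext_obj B0 B1 Y i)) n :
  d 0%N = f -> (0 < n)%N -> chain_exact d n -> Sres (fun X (_ : M X) => True) n.
Proof.
move=> d0 n0 Hch.
exists (ext_obj B0 B1 Y), d, eps; split.
- move=> X y; split => // _; exact: Hs.
- by move=> e; rewrite e in n0.
- move=> _ X x. by rewrite d0.
- exact: Hch.
Qed.
End Res.


Section Parts.
Variable C : AddCat.
Hypothesis HC : idem_complete C.

Lemma surjT (M : Mod C) (A0 : Obj C) (sig : M A0) :
  (forall X (y : M X), exists q : cHom X A0, mmap q sig = y) ->
  forall X (y : M X), True <-> exists q : cHom X A0, mmap q sig = y.
Proof. by move=> H X y; split => // _; exact: H. Qed.

Lemma two_shifts (A1 A0 : Obj C) (f1 : cHom A1 A0) (M : Mod C) (sig : M A0) k :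
  (forall X (y : M X), exists q : cHom X A0, mmap q sig = y) ->
  (forall X (x : cHom X A0), mmap x sig = 0 <-> exists z, ccomp f1 z = x) ->
  Sres (fun X (_ : M X) => True) k.+2 ->
  exists (Y : nat -> Obj C) (d : forall i, cHom (ext_obj A0 A1 Y i.+1) (ext_obj A0 A1 Y i)),
    d 0%N = f1 /\ chain_exact d k.+2.
Proof.
move=> Hs Hk HS.
have S1 := shift HC (surjT Hs) HS.
have HT2 : forall X (y : Rep A0 X), mmap y sig = 0 <->
    exists q : cHom X A1, mmap q (f1 : Rep A0 A1) = y.
  move=> X y. exact: Hk.
exact: chain_of_S (shift HC HT2 S1).
Qed.

Lemma part1 l : (2 <= l)%N ->
     (unif_reg_coherent C l <->
      forall (A1 A0 : Obj C) (f1 : cHom A1 A0),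
        exists (Y : nat -> Obj C)
               (d : forall i, cHom (ext_obj A0 A1 Y i.+1) (ext_obj A0 A1 Y i)),
          d 0%N = f1 /\ chain_exact d l).
Proof.
move=> l2; split.
- move=> Hu A1 A0 f1.
  case: (coker_exists f1) => M [sig [Hfp [Hs Hk]]].
  have HS := res_to_S HC (Hu M Hfp).
  case: l l2 Hu HS => [|[|k]] // _ _ HS.
  exact: two_shifts Hs Hk HS.
- move=> H M Hfp.
  case: (pres_of_finpres Hfp) => B1 [B0 [f [eps [Hs Hk]]]].
  case: (H B1 B0 f) => Y [d [d0 Hch]].
  apply: S_to_res. apply: (S_of_chain Hs Hk d0 _ Hch).
  exact: leq_trans l2.
Qed.

Lemma part2 :
  (unif_reg_coherent C 1 <->
   forall (A1 A0 : Obj C) (f : cHom A1 A0),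
     exists (B : Obj C) (f1 : cHom A1 B) (f0 : cHom B A0),
       [/\ f = ccomp f0 f1, csurj f1 & cinj f0]).
Proof.
split.
- move=> Hu A1 A0 f.
  case: (coker_exists f) => M [sig [Hfp [Hs Hk]]].
  have HS := res_to_S HC (Hu M Hfp).
  case: (shift HC (surjT Hs) HS) => B [g [eps [Ha Hb _ _]]].
  have mono : forall X (x : cHom X (B 0%N)), ccomp eps x = 0 -> x = 0.
    move=> X x H. exact: (Hb erefl X x H).
  have [g1 Hg1] : exists x : cHom A1 (B 0%N), ccomp eps x = f.
    apply/Ha. apply/Hk. exists (idm _). exact: c1r.
  exists (B 0%N), g1, eps; split => //.
  + move=> X y.
    have : mmap (ccomp eps y) sig = 0 by apply/Ha; exists y.
    case/Hk => z Hz. exists z. apply/eqP; rewrite -subr_eq0; apply/eqP.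
    apply: mono. by rewrite compBr cA Hg1 Hz subrr.
  + move=> X h h' E. apply/eqP; rewrite -subr_eq0; apply/eqP.
    apply: mono. by rewrite compBr E subrr.
- move=> H M Hfp.
  case: (pres_of_finpres Hfp) => B1 [B0 [f [eps [Hs Hk]]]].
  case: (H B1 B0 f) => B [f1 [f0 [ef Hsurj Hinj]]].
  apply: S_to_res.
  pose B' := fun i => match i with 0%N => B0 | _ => B end.
  exists B', (fun i => match i return cHom (B' i.+1) (B' i) with 0%N => f0 | _ => 0 end), eps.
  split.
  + move=> X y; split => // _; exact: Hs.
  + by [].
  + move=> _ X x; split.
    * case/Hk => z <-. exists (ccomp f1 z). by rewrite /= ef cA.
    * case=> z <- /=. case: (Hsurj X z) => w <-. apply/Hk. exists w. by rewrite ef cA.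
  + split => //. case=> // _ X h /= Hh. apply: Hinj. by rewrite Hh comp0r.
Qed.

Lemma a_to_c : unif_reg_coherent C 0 ->
    forall (A1 A0 : Obj C) (f : cHom A1 A0),
      exists g : cHom A0 A1, ccomp f (ccomp g f) = f.
Proof.
move=> Hu A1 A0 f1.
case: (coker_exists f1) => M [sig [Hfp [Hs Hk]]].
case: (res_to_S HC (Hu M Hfp)) => B [g [eps [Ha Hb _ _]]].
have mono := Hb erefl.
have [a Ha'] : exists a : cHom A0 (B 0%N), mmap a eps = sig by apply/Ha.
case: (Hs _ eps) => b Hb'.
have ab : ccomp a b = idm _.
  apply/eqP; rewrite -subr_eq0; apply/eqP; apply: mono.
  by rewrite mmapBf mmapM Ha' Hb' mmap1 subrr.
have [h Hh] : exists h, ccomp f1 h = idm A0 - ccomp b a.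
  apply/Hk. by rewrite mmapBf mmapM Hb' Ha' mmap1 subrr.
have af : ccomp a f1 = 0.
  apply: mono. rewrite mmapM Ha'. apply/Hk. by exists (idm _); rewrite c1r.
exists h. by rewrite cA Hh compBl c1l -cA af comp0r subr0.
Qed.

Lemma c_to_b : (forall (A1 A0 : Obj C) (f : cHom A1 A0),
      exists g : cHom A0 A1, ccomp f (ccomp g f) = f) ->
    forall (A1 A0 : Obj C) (f1 : cHom A1 A0),
      exists (Am1 : Obj C) (f0 : cHom A0 Am1), cexact f1 f0 /\ csurj f0.
Proof.
move=> Hc A1 A0 f1.
case: (Hc _ _ f1) => g Hg.
pose p := idm A0 - ccomp f1 g.
have pp : ccomp p p = p.
  rewrite /p compBl c1l compBr c1r -cA [ccomp g (ccomp f1 g)]cA cA Hg.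
  by rewrite subrr subr0.
case: (HC pp) => D [E [i1 [i2 [p1 [p2 [e11 e22 e12 e21 [eid ei]]]]]]].
have p1p : ccomp p1 p = p1 by rewrite ei cA e11 c1l.
exists D, p1; split; first split.
- by rewrite -p1p -cA /p compBl c1l -cA Hg subrr comp0r.
- move=> X h H.
  have : ccomp p h = 0 by rewrite ei -cA H comp0r.
  rewrite /p compBl c1l => /eqP; rewrite subr_eq0 => /eqP Eh.
  exists (ccomp g h). by rewrite cA -Eh.
- move=> X h. exists (ccomp i1 h). by rewrite cA e11 c1l.
Qed.

Lemma b_to_a : (forall (A1 A0 : Obj C) (f1 : cHom A1 A0),
      exists (Am1 : Obj C) (f0 : cHom A0 Am1), cexact f1 f0 /\ csurj f0) ->
    unif_reg_coherent C 0.
Proof.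
move=> Hb M Hfp.
case: (pres_of_finpres Hfp) => B1 [B0 [f [eps [Hs Hk]]]].
case: (Hb B1 B0 f) => Am1 [f0 [[Hf0f Hex] Hsurj]].
case: (Hsurj Am1 (idm Am1)) => s Hs0.
apply: S_to_res.
exists (fun _ => Am1), (fun _ => 0), (mmap s eps); split.
- move=> X y; split => // _.
  case: (Hs X y) => x0 <-. exists (ccomp f0 x0). rewrite -mmapM.
  have : ccomp f0 (x0 - ccomp s (ccomp f0 x0)) = 0.
    by rewrite compBr cA cA Hs0 c1l subrr.
  case/Hex => z Hz.
  have : mmap (x0 - ccomp s (ccomp f0 x0)) eps = 0 by apply/Hk; exists z.
  by rewrite mmapBf => /eqP; rewrite subr_eq0 => /eqP ->.
- move=> _ X x. rewrite -mmapM => /Hk [z Hz].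
  by rewrite -[x]c1l -Hs0 -cA -Hz cA Hf0f comp0l.
- by [].
- by split.
Qed.

Lemma part3 :
  ((unif_reg_coherent C 0 <->
    forall (A1 A0 : Obj C) (f1 : cHom A1 A0),
      exists (Am1 : Obj C) (f0 : cHom A0 Am1), cexact f1 f0 /\ csurj f0)
   /\
   (unif_reg_coherent C 0 <->
    forall (A1 A0 : Obj C) (f : cHom A1 A0),
      exists g : cHom A0 A1, ccomp f (ccomp g f) = f)).
Proof.
split; split.
- by move=> H; apply: c_to_b; apply: a_to_c.
- exact: b_to_a.
- exact: a_to_c.
- by move=> H; apply: b_to_a; apply: c_to_b.
Qed.

Lemma part4 :
  (reg_coherent C <->
   forall (A1 A0 : Obj C) (f1 : cHom A1 A0),
     exists (n : nat) (Y : nat -> Obj C)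
            (d : forall i, cHom (ext_obj A0 A1 Y i.+1) (ext_obj A0 A1 Y i)),
       [/\ (1 <= n)%N, d 0%N = f1 & chain_exact d n]).
Proof.
split.
- move=> Hr A1 A0 f1.
  case: (coker_exists f1) => M [sig [Hfp [Hs Hk]]].
  case: (Hr M Hfp) => n Hres.
  have HS := res_to_S HC Hres.
  have [k Hk2] : exists k, Sres (fun X (_ : M X) => True) k.+2.
    case: n HS {Hres} => [|[|k]] HS.
    + exists 0%N. exact: pad12 (pad01 HS).
    + exists 0%N. exact: pad12 HS.
    + by exists k.
  case: (two_shifts Hs Hk Hk2) => Y [d [d0 Hch]].
  by exists k.+2, Y, d.
- move=> H M Hfp.
  case: (pres_of_finpres Hfp) => B1 [B0 [f [eps [Hs Hk]]]].
  case: (H B1 B0 f) => n [Y [d [n1 d0 Hch]]].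
  exists n. apply: S_to_res. exact: (S_of_chain Hs Hk d0 n1 Hch).
Qed.
End Parts.


Unset Implicit Arguments.

Theorem mainTheorem12 (C : AddCat) (HC : idem_complete C) :
  (* (1) *)
  (forall l : nat, (2 <= l)%N ->
     (unif_reg_coherent C l <->
      forall (A1 A0 : Obj C) (f1 : cHom A1 A0),
        exists (Y : nat -> Obj C)
               (d : forall i, cHom (ext_obj A0 A1 Y i.+1) (ext_obj A0 A1 Y i)),
          d 0%N = f1 /\ chain_exact d l))
  /\
  (* (2) *)
  (unif_reg_coherent C 1 <->
   forall (A1 A0 : Obj C) (f : cHom A1 A0),
     exists (B : Obj C) (f1 : cHom A1 B) (f0 : cHom B A0),
       [/\ f = ccomp f0 f1, csurj f1 & cinj f0])
  /\
  (* (3) (a) <-> (b) and (a) <-> (c) *)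
  ((unif_reg_coherent C 0 <->
    forall (A1 A0 : Obj C) (f1 : cHom A1 A0),
      exists (Am1 : Obj C) (f0 : cHom A0 Am1), cexact f1 f0 /\ csurj f0)
   /\
   (unif_reg_coherent C 0 <->
    forall (A1 A0 : Obj C) (f : cHom A1 A0),
      exists g : cHom A0 A1, ccomp f (ccomp g f) = f))
  /\
  (* (4) *)
  (reg_coherent C <->
   forall (A1 A0 : Obj C) (f1 : cHom A1 A0),
     exists (n : nat) (Y : nat -> Obj C)
            (d : forall i, cHom (ext_obj A0 A1 Y i.+1) (ext_obj A0 A1 Y i)),
       [/\ (1 <= n)%N, d 0%N = f1 & chain_exact d n]).
Proof.
split; first exact: part1 HC.
split; first exact: part2 HC.
split; first exact: part3 HC.
exact: part4 HC.
Qed.
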